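(* Let $t,d\in\mathbb{C}[[z]]$ with $t^2-4d$ having a simple zero at $z=0$, and let $\tilde X$ be the corresponding spectral curve. Then all objects of the groupoid $\widetilde{\mathrm{Conn}}(\tilde X)$ are isomorphic.
   Context: $\tilde X=\operatorname{Spf}\mathbb{C}[[\tilde z]]$ is the spectral curve $\xi^2-t(z)\xi+d(z)=0$ in $T^*\operatorname{Spf}\mathbb{C}[[z]]=\operatorname{Spf}\mathbb{C}[\xi][[z]]$, with coordinate $\tilde z=\sqrt{t^2-4d}$ and canonical $1$-form $\mu=\xi\,dz|_{\tilde X}$. $\widetilde{\mathrm{Conn}}(\tilde X)$ is the groupoid of pairs $(l,\delta)$ with $l$ a free rank-1 $\mathbb{C}[[\tilde z,\lambda]]$-module and $\delta:l\to\tilde z^{-1}l\,d\tilde z$ a $\mathbb{C}[[\lambda]]$-linear map with $\delta(fs)=f\delta s+\lambda s\,df$, residue $-\lambda/2$, and reduction mod $\lambda$ equal to $\mu$; morphisms are isomorphisms compatible with $\delta$. *)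

(* Defs.v *)
From mathcomp Require Import all_boot all_order all_algebra.
From mathcomp Require Import complex reals Rstruct.
Set Implicit Arguments. Unset Strict Implicit. Unset Printing Implicit Defensive.
Import Order.TTheory GRing.Theory Num.Theory.
Local Open Scope ring_scope.

Definition C : numClosedFieldType := complex Rdefinitions.R.

(** * One-variable formal power series  C[[x]] : coefficient sequences. *)
Definition ps1 := nat -> C.

Definition ps1_add (f g : ps1) : ps1 := fun n => f n + g n.
Definition ps1_scale (c : C) (f : ps1) : ps1 := fun n => c * f n.
Definition ps1_mul (f g : ps1) : ps1 :=
  fun n => \sum_(k < n.+1) f k * g (n - k)%N.
Definition ps1_one : ps1 := fun n => if n == 0%N then 1 else 0.
Definition ps1_X : ps1 := fun n => if n == 1%N then 1 else 0.
Fixpoint ps1_pow (f : ps1) (k : nat) : ps1 :=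
  match k with 0 => ps1_one | k'.+1 => ps1_mul f (ps1_pow f k') end.
(** composition f(g(x)), meaningful when g 0 = 0 (then only k <= n contribute) *)
Definition ps1_comp (f g : ps1) : ps1 :=
  fun n => \sum_(k < n.+1) f k * ps1_pow g k n.
Definition ps1_deriv (f : ps1) : ps1 := fun n => (n.+1)%:R * f n.+1.

(** * Two-variable formal power series  C[[zt, lambda]]:
    [F i j] is the coefficient of  zt^i lambda^j. *)
Definition ps2 := nat -> nat -> C.

Definition ps2_add (F G : ps2) : ps2 := fun i j => F i j + G i j.
Definition ps2_mul (F G : ps2) : ps2 :=
  fun i j => \sum_(a < i.+1) \sum_(b < j.+1) F a b * G (i - a)%N (j - b)%N.
Definition ps2_one : ps2 := fun i j => if (i == 0%N) && (j == 0%N) then 1 else 0.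
Definition ps2_lam : ps2 := fun i j => if (i == 0%N) && (j == 1%N) then 1 else 0.
Definition ps2_zt : ps2 := fun i j => if (i == 1%N) && (j == 0%N) then 1 else 0.
Definition ps2_const (c : C) : ps2 := fun i j => if (i == 0%N) && (j == 0%N) then c else 0.
Definition ps2_of_zt (f : ps1) : ps2 := fun i j => if j == 0%N then f i else 0.
Definition ps2_of_lam (c : ps1) : ps2 := fun i j => if i == 0%N then c j else 0.
Definition ps2_dzt (F : ps2) : ps2 := fun i j => (i.+1)%:R * F i.+1 j.
Definition ps2_mod_lam (F : ps2) : ps1 := fun i => F i 0%N.
Definition ps2_mod_zt (F : ps2) : ps1 := fun j => F 0%N j.

(** The spectral curve Xt = Spf C[[zt]] maps to Spf C[[z]]
    by z = Z(zt), where Z(0) = 0 and zt^2 = t(Z)^2 - 4 d(Z), i.e.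
    zt = sqrt(t^2 - 4d); on Xt the fibre coordinate is xi = (t(Z) + zt)/2
    (so that zt = 2 xi - t and xi^2 - t xi + d = 0). *)
Definition simple_zero (f : ps1) : Prop := f 0%N = 0 /\ f 1%N != 0.

Definition discr (t d : ps1) : ps1 :=
  ps1_add (ps1_mul t t) (ps1_scale (-4) d).

Definition spectral_param (t d Z : ps1) : Prop :=
  Z 0%N = 0 /\ discr (ps1_comp t Z) (ps1_comp d Z) = ps1_mul ps1_X ps1_X.

Definition xi_on (t Z : ps1) : ps1 := ps1_scale (2^-1) (ps1_add (ps1_comp t Z) ps1_X).

(** the canonical 1-form mu = xi dz |_Xt = m(zt) dzt, m = xi * dZ/dzt *)
Definition mu_coef (t Z : ps1) : ps1 := ps1_mul (xi_on t Z) (ps1_deriv Z).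

(** A free rank-1 C[[zt,lambda]]-module l is trivialised as l = C[[zt,lambda]];
    an element  zt^{-1} g dzt  of  zt^{-1} l dzt  is encoded by  g in l.
    Thus a map  delta : l -> zt^{-1} l dzt  is encoded by  D : ps2 -> ps2
    with  delta s = zt^{-1} (D s) dzt. *)
Definition lambda_conn (t Z : ps1) (D : ps2 -> ps2) : Prop :=
  (forall s s', D (ps2_add s s') = ps2_add (D s) (D s')) /\
  (forall (c : ps1) s, D (ps2_mul (ps2_of_lam c) s) = ps2_mul (ps2_of_lam c) (D s)) /\
  (* Leibniz rule  delta(f s) = f delta s + lambda s df,
     in the encoding:  D(f s) = f D(s) + lambda s zt (df/dzt) *)
  (forall f s, D (ps2_mul f s) =
     ps2_add (ps2_mul f (D s))
             (ps2_mul ps2_lam (ps2_mul s (ps2_mul ps2_zt (ps2_dzt f))))) /\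
  (* residue at zt = 0 is  -lambda/2 :  (D s) mod zt = (-lambda/2) (s mod zt) *)
  (forall s, ps2_mod_zt (D s) =
     ps2_mod_zt (ps2_mul (ps2_mul (ps2_const (- 2^-1)) ps2_lam) s)) /\
  (* reduction mod lambda equals mu:  (delta s) mod lambda = mu * (s mod lambda),
     i.e. (D s) mod lambda = zt * m(zt) * (s mod lambda) *)
  (forall s, ps2_mod_lam (D s) =
     ps1_mul (ps1_mul ps1_X (mu_coef t Z)) (ps2_mod_lam s)).

(** Morphisms: C[[zt,lambda]]-module isomorphisms compatible with delta
    (the induced map on zt^{-1} l dzt is phi applied to the encoding). *)
Definition conn_iso (D1 D2 : ps2 -> ps2) : Prop :=
  exists phi : ps2 -> ps2,
    bijective phi /\
    (forall s s', phi (ps2_add s s') = ps2_add (phi s) (phi s')) /\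
    (forall f s, phi (ps2_mul f s) = ps2_mul f (phi s)) /\
    (forall s, D2 (phi s) = phi (D1 s)).

(* Main.v *)
Require Import Defs.
From mathcomp Require Import all_boot all_order all_algebra.
From Stdlib Require Import FunctionalExtensionality.
Import Order.TTheory GRing.Theory Num.Theory.
Local Open Scope ring_scope.

Lemma ps2_ext (F G : ps2) : (forall i j, F i j = G i j) -> F = G.
Proof. move=> H; apply: functional_extensionality => i; apply: functional_extensionality => j; exact: H. Qed.

Lemma tri (K : nat -> nat -> nat -> C) (i : nat) :
  \sum_(a < i.+1) \sum_(c < a.+1) K c (a - c)%N (i - a)%N =
  \sum_(c < i.+1) \sum_(e < (i - c).+1) K c e (i - c - e)%N.
Proof.
transitivity (\sum_(a < i.+1) \sum_(c < i.+1 | (c < a.+1)%N) K c (a - c)%N (i - a)%N).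
  by apply: eq_bigr => a _; rewrite (big_ord_widen i.+1 (fun c => K c (a - c)%N (i - a)%N)) // ltnS -ltnS.
rewrite (exchange_big_dep predT) //=; apply: eq_bigr => c _.
have ci : (c <= i)%N by rewrite -ltnS.
rewrite (eq_bigl (fun a : 'I_i.+1 => predT a && (c <= a)%N)); last by move=> a; rewrite ltnS.
rewrite -(big_geq_mkord c i.+1 predT (fun a => K c (a - c)%N (i - a)%N)) -{1}(add0n c) big_addn subSn // big_mkord.
apply: eq_bigr => e _; rewrite addnK; congr K.
by rewrite subnDA subnAC.
Qed.

Lemma rev1 (h : nat -> nat -> C) n :
  \sum_(a < n.+1) h a (n - a)%N = \sum_(a < n.+1) h (n - a)%N a.
Proof.
rewrite (reindex_inj rev_ord_inj); apply: eq_bigr => a _ /=.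
by rewrite subSS subKn // -ltnS.
Qed.

Definition ps2_zero : ps2 := fun _ _ => 0.
Definition ps2_opp (F : ps2) : ps2 := fun i j => - F i j.
Definition ps2_sub (F G : ps2) : ps2 := ps2_add F (ps2_opp G).

Lemma ps2_mul1l F : ps2_mul ps2_one F = F.
Proof.
apply: ps2_ext => i j; rewrite /ps2_mul big_ord_recl [X in _ + X]big1 ?addr0; last first.
  by move=> a _; apply: big1 => b _; rewrite /ps2_one /= mul0r.
rewrite big_ord_recl [X in _ + X]big1 ?addr0; last by move=> b _; rewrite /ps2_one /= mul0r.
by rewrite /ps2_one /= mul1r !subn0.
Qed.

Lemma ps2_mulC F G : ps2_mul F G = ps2_mul G F.
Proof.
apply: ps2_ext => i j; rewrite /ps2_mul.
rewrite (rev1 (fun a a' => \sum_(b < j.+1) F a b * G a' (j - b)%N)).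
apply: eq_bigr => a _.
rewrite (rev1 (fun b b' => F (i - a)%N b * G a b')).
by apply: eq_bigr => b _; rewrite mulrC.
Qed.

Lemma ps2_mulA F G H : ps2_mul F (ps2_mul G H) = ps2_mul (ps2_mul F G) H.
Proof.
apply: ps2_ext => i j; rewrite /ps2_mul.
transitivity (\sum_(c < i.+1) \sum_(x < (i-c).+1) \sum_(e < j.+1) \sum_(y < (j-e).+1)
   F c e * G x y * H (i-c-x)%N (j-e-y)%N).
  apply: eq_bigr => c _.
  under eq_bigr => e _ do rewrite mulr_sumr.
  rewrite exchange_big; apply: eq_bigr => x _; apply: eq_bigr => e _.
  by rewrite mulr_sumr; apply: eq_bigr => y _; rewrite mulrA.
symmetry.
transitivity (\sum_(a < i.+1) \sum_(c < a.+1) \sum_(b < j.+1) \sum_(e < b.+1)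
   F c e * G (a - c)%N (b - e)%N * H (i - a)%N (j - b)%N).
  apply: eq_bigr => a _.
  under eq_bigr => b _ do rewrite mulr_suml.
  rewrite exchange_big; apply: eq_bigr => c _; apply: eq_bigr => b _.
  by rewrite mulr_suml.
rewrite (tri (fun c x y => \sum_(b < j.+1) \sum_(e < b.+1)
   F c e * G x (b - e)%N * H y (j - b)%N)).
apply: eq_bigr => c _; apply: eq_bigr => x _.
exact: (tri (fun e x' y => F c e * G x x' * H (i - c - x)%N y)).
Qed.

Lemma ps2_distrl F G H : ps2_mul (ps2_add F G) H = ps2_add (ps2_mul F H) (ps2_mul G H).
Proof.
apply: ps2_ext => i j; rewrite /ps2_mul /ps2_add -big_split /=.
by apply: eq_bigr => a _; rewrite -big_split /=; apply: eq_bigr => b _; rewrite mulrDl.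
Qed.

From Stdlib Require Import Ring_theory Ring.

Lemma ps2_rt : ring_theory ps2_zero ps2_one ps2_add ps2_mul ps2_sub ps2_opp (@eq ps2).
Proof.
constructor.
- by move=> x; apply: ps2_ext => i j; rewrite /ps2_add /ps2_zero add0r.
- by move=> x y; apply: ps2_ext => i j; rewrite /ps2_add addrC.
- by move=> x y z; apply: ps2_ext => i j; rewrite /ps2_add addrA.
- exact: ps2_mul1l.
- exact: ps2_mulC.
- exact: ps2_mulA.
- exact: ps2_distrl.
- by [].
- by move=> x; apply: ps2_ext => i j; rewrite /ps2_add /ps2_opp /ps2_zero subrr.
Qed.

Add Ring ps2r : ps2_rt.

Section Srec.
Variable Fr : ps2 -> nat -> nat -> C.
Hypothesis Hdep : forall g g' i, (forall a j, (a < i)%N -> g a j = g' a j) ->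
  forall j, Fr g i j = Fr g' i j.

Definition srec n : ps2 := iter n.+1 Fr ps2_zero.
Definition sfix : ps2 := fun i j => srec i i j.

Lemma srec_stab n a j : (a <= n)%N -> srec n a j = srec n.+1 a j.
Proof.
elim: n a j => [|n IH] a j.
  rewrite leqn0 => /eqP ->; apply: Hdep => b j' //.
move=> han; rewrite /srec iterS; rewrite [in RHS]iterS.
apply: Hdep => b j' hb; apply: IH; rewrite -ltnS; exact: leq_trans hb han.
Qed.

Lemma srec_stab2 n m a j : (a <= n)%N -> srec n a j = srec (n + m) a j.
Proof.
move=> h; elim: m => [|m IH]; first by rewrite addn0.
rewrite IH addnS srec_stab //; exact: leq_trans h (leq_addr _ _).
Qed.

Lemma sfix_eq i j : sfix i j = Fr sfix i j.
Proof.
case: i => [|n]; rewrite /sfix.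
  by apply: Hdep => a j' //.
rewrite /srec iterS; apply: Hdep => a j' ha.
have ha' : (a <= n)%N by [].
change (srec n a j' = srec a a j'); rewrite -(subnKC ha') -srec_stab2 //.
Qed.
End Srec.

Lemma lam_mul F i j : ps2_mul ps2_lam F i j = if j is j'.+1 then F i j' else 0.
Proof.
rewrite /ps2_mul big_ord_recl [X in _ + X]big1 ?addr0; last first.
  by move=> a _; apply: big1 => b _; rewrite /ps2_lam /= mul0r.
case: j => [|j].
  by rewrite big_ord_recl big_ord0 /ps2_lam /= mul0r addr0.
rewrite big_ord_recl big_ord_recl [X in _ + (_ + X)]big1; last first.
  by move=> b _; rewrite /ps2_lam /= mul0r.
by rewrite /ps2_lam /= mul0r mul1r add0r addr0 subn0 subSS subn0.
Qed.

Lemma zt_mul F i j : ps2_mul ps2_zt F i j = if i is i'.+1 then F i' j else 0.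
Proof.
rewrite /ps2_mul big_ord_recl big1 ?add0r; last first.
  by move=> b _; rewrite /ps2_zt /= mul0r.
case: i => [|i].
  by rewrite big_ord0.
rewrite big_ord_recl [X in _ + X]big1 ?addr0; last first.
  by move=> a _; apply: big1 => b _; rewrite /ps2_zt /= mul0r.
rewrite big_ord_recl big1 ?addr0; last by move=> b _; rewrite /ps2_zt /= mul0r.
by rewrite /ps2_zt /= mul1r subn0 subSS subn0.
Qed.

Lemma ps2_mul1r F : ps2_mul F ps2_one = F.
Proof. by rewrite ps2_mulC ps2_mul1l. Qed.

Section Main.
Variable k : ps2.

Definition Fu (g : ps2) (i j : nat) : C :=
  match i with
  | 0 => if j == 0%N then 1 else 0
  | i'.+1 => (i'.+1%:R)^-1 *
      \sum_(a < i'.+1) \sum_(b < j.+1) g a b * k (i' - a)%N (j - b)%N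
  end.

Lemma Fu_dep g g' i : (forall a j, (a < i)%N -> g a j = g' a j) ->
  forall j, Fu g i j = Fu g' i j.
Proof.
case: i => [|i] H j //; rewrite /Fu; congr (_ * _); apply: eq_bigr => a _; apply: eq_bigr => b _.
by rewrite H.
Qed.

Definition uu : ps2 := sfix Fu.

Lemma uu0 j : uu 0 j = if j == 0%N then 1 else 0.
Proof. by rewrite /uu (sfix_eq _ Fu_dep). Qed.

Lemma uu_ode : ps2_dzt uu = ps2_mul uu k.
Proof.
apply: ps2_ext => i j; rewrite /ps2_dzt {1}/uu (sfix_eq _ Fu_dep) /= -/uu.
rewrite mulrA divff ?mul1r //.
by rewrite pnatr_eq0.
Qed.

Definition Fv (g : ps2) (i j : nat) : C :=
  (if (i == 0%N) && (j == 0%N) then 1 else 0) -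
  \sum_(a < i) \sum_(b < j.+1) g a b * uu (i - a)%N (j - b)%N.

Lemma Fv_dep g g' i : (forall a j, (a < i)%N -> g a j = g' a j) ->
  forall j, Fv g i j = Fv g' i j.
Proof.
move=> H j; rewrite /Fv; congr (_ - _); apply: eq_bigr => a _; apply: eq_bigr => b _.
by rewrite H.
Qed.

Definition vv : ps2 := sfix Fv.

Lemma ordmaxE n : nat_of_ord (@ord_max n) = n.
Proof. by []. Qed.

Lemma inner0 (w : nat -> C) j :
  \sum_(b < j.+1) w b * uu 0 (j - b)%N = w j.
Proof.
rewrite big_ord_recr ordmaxE subnn uu0 eqxx mulr1 big1; first by rewrite /= add0r.
move=> b _; rewrite uu0.
have -> : (j - widen_ord (leqnSn j) b == 0)%N = false by apply/negbTE; rewrite subn_eq0 -ltnNge; exact: (ltn_ord b).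
by rewrite mulr0.
Qed.

Lemma vv_uu : ps2_mul vv uu = ps2_one.
Proof.
apply: ps2_ext => i j; rewrite /ps2_mul big_ord_recr ordmaxE subnn inner0.
rewrite {2}/vv (sfix_eq _ Fv_dep) /Fv -/vv /ps2_one.
set d := (if _ then _ else _).
set S := \sum_(a < i) \sum_(b < j.+1) vv a b * uu (i - a)%N (j - b)%N.
transitivity (S + (d - S)); first by [].
by rewrite addrC subrK.
Qed.
End Main.

Lemma conn_form t Z D : lambda_conn t Z D -> forall f,
  D f = ps2_add (ps2_mul f (D ps2_one))
          (ps2_mul ps2_lam (ps2_mul ps2_one (ps2_mul ps2_zt (ps2_dzt f)))).
Proof. by move=> [_ [_ [Le _]]] f; rewrite -Le ps2_mul1r. Qed.

Theorem lemma4p10 (t d Z : ps1) :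
  simple_zero (discr t d) ->
  spectral_param t d Z ->
  forall D1 D2 : ps2 -> ps2,
    lambda_conn t Z D1 -> lambda_conn t Z D2 -> conn_iso D1 D2.
Proof.
move=> _ _ D1 D2 H1 H2.
have HD1 := @conn_form t Z D1 H1; have HD2 := @conn_form t Z D2 H2.
case: H1 => _ [_ [_ [R1 M1]]]; case: H2 => _ [_ [Le2 [R2 M2]]].
set g1 := D1 ps2_one in HD1 *; set g2 := D2 ps2_one in HD2 *.
pose k : ps2 := fun i j => g1 i.+1 j.+1 - g2 i.+1 j.+1.
have Hdec : g1 = ps2_add g2 (ps2_mul ps2_lam (ps2_mul ps2_zt k)).
  apply: ps2_ext => i j; rewrite /ps2_add lam_mul.
  case: j => [|j].
    have E := M1 ps2_one; rewrite -(M2 ps2_one) in E.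
    have -> : g1 i 0%N = g2 i 0%N by exact: (congr1 (fun f : ps1 => f i) E).
    by rewrite addr0.
  rewrite zt_mul; case: i => [|i].
    have E := R1 ps2_one; rewrite -(R2 ps2_one) in E.
    have -> : g1 0%N j.+1 = g2 0%N j.+1 by exact: (congr1 (fun f : ps1 => f j.+1) E).
    by rewrite addr0.
  by rewrite /k addrC subrK.
exists (fun s => ps2_mul s (uu k)).
split.
  exists (fun s => ps2_mul s (vv k)) => s.
    transitivity (ps2_mul s (ps2_mul (vv k) (uu k))); first by ring.
    by rewrite vv_uu; ring.
  transitivity (ps2_mul s (ps2_mul (vv k) (uu k))); first by ring.
  by rewrite vv_uu; ring.
split; first by move=> s s'; ring.
split; first by move=> f s; ring.
move=> s.
rewrite Le2 (HD2 (uu k)) uu_ode (HD1 s) Hdec.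
ring.
Qed.
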